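(* Let $m\ge2$, consider the simply laced Cartan matrix of type $\tilde A_m$ (graph: the cycle on vertices $1,\dots,m+1$ with edges $\{j,j+1\}$, indices mod $m+1$) with an acyclic orientation, and let $z_1,\dots,z_{m+1}$ be commuting indeterminates. Define the frise with variables by $a(j,0)=z_j$ and $a(j,n)a(j,n+1)=1+\big(\prod_{j\to i}a(i,n)\big)\big(\prod_{i\to j}a(i,n+1)\big)$. Then for each $j$, the sequence $(a(j,n))_{n\in\mathbf N}$ is $K$-rational, where $K=\mathbf N[z_1^{\pm1},\dots,z_{m+1}^{\pm1}]$ is the semiring of Laurent polynomials in the $z_i$ with nonnegative integer coefficients.
   Context: For a commutative semiring $K$, a sequence $(a_n)_{n\in\mathbf N}$ in $K$ is $K$-rational if there exist $r\ge1$, $\lambda\in K^{1\times r}$, $M\in K^{r\times r}$, $\gamma\in K^{r\times1}$ with $a_n=\lambda M^n\gamma$ for all $n$ (equivalently, $\sum a_nX^n$ lies in the smallest subsemiring of $K[[X]]$ containing $K[X]$ and closed under $T\mapsto\sum_{k\ge0}T^k$ for $T$ without constant term). The orientation notation $i\to j$ means the edge $\{i,j\}$ is oriented from $i$ to $j$; the recurrence determines the $a(j,n)$ as rational functions since the orientation is acyclic. *)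

(* Defs.v *)
From HB Require Import structures.
From mathcomp Require Import all_boot all_order all_algebra.
Set Implicit Arguments. Unset Strict Implicit. Unset Printing Implicit Defensive.
Import Order.TTheory GRing.Theory Num.Theory.
Local Open Scope ring_scope.

(* Polynomials with integer coefficients in n commuting indeterminates,
   built as iterated univariate polynomials: mpoly n.+1 = {poly mpoly n}. *)
Fixpoint mpoly (n : nat) : idomainType :=
  if n is n'.+1 then GRing.IntegralDomain.clone {poly (mpoly n')} _
  else GRing.IntegralDomain.clone int _.

(* The i-th indeterminate (i < n) of mpoly n; the last one is the outer 'X. *)
Fixpoint mvar (n : nat) : nat -> mpoly n :=
  if n is n'.+1 then fun i => if i == n' then ('X : {poly mpoly n'})
                                else ((mvar n' i)%:P : {poly mpoly n'})
  else fun _ => (0 : int).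

Fixpoint nonneg_coefs (n : nat) : mpoly n -> bool :=
  if n is n'.+1 then fun p : {poly mpoly n'} => all (@nonneg_coefs n') p
  else fun x : int => 0 <= x.

Definition ratfun (n : nat) : fieldType := {fraction (mpoly n)}.

(* The indeterminate z_i (0-based) as a rational function. *)
Definition zvar (n : nat) (i : 'I_n) : ratfun n := FracField.tofrac (mvar n i).

(* The semiring K = N[z_1^{±1},...,z_n^{±1}], viewed as a subsemiring of
   ratfun n: elements p / z^e with p in N[z] and e a monomial exponent. *)
Definition in_K (n : nat) (x : ratfun n) : Prop :=
  exists (p : mpoly n) (e : 'I_n -> nat),
    nonneg_coefs p /\
    x = FracField.tofrac p / \prod_(i < n) zvar i ^+ e i.

Definition K_rational (n : nat) (a : nat -> ratfun n) : Prop :=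
  exists (r : nat) (lam : 'rV[ratfun n]_r.+1) (M : 'M[ratfun n]_r.+1)
         (gam : 'cV[ratfun n]_r.+1),
    (forall j, in_K (lam 0 j)) /\ (forall i j, in_K (M i j)) /\
    (forall i, in_K (gam i 0)) /\
    forall k, a k = (lam *m (M ^+ k) *m gam) 0 0.

(* Orientation of the cycle on 'I_N (vertices 0..N-1, edges {j, j+1 mod N}):
   o j = true means the edge {j, j+1} is oriented j -> j+1, else j+1 -> j.
   cyc_arrow o i j means i -> j. *)
Definition cyc_arrow (N : nat) (o : 'I_N -> bool) : rel 'I_N :=
  fun i j => ((j == ordS i) && o i) || ((i == ordS j) && ~~ o j).

Definition acyclic_orientation (N : nat) (o : 'I_N -> bool) : bool :=
  ~~ [exists i, exists j, cyc_arrow o i j && connect (cyc_arrow o) j i].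

Definition frise_with_variables (m : nat) (o : 'I_m.+1 -> bool)
    (a : 'I_m.+1 -> nat -> ratfun m.+1) : Prop :=
  (forall j, a j 0%N = zvar j) /\
  forall j (k : nat),
    a j k * a j k.+1 =
      1 + (\prod_(i | cyc_arrow o j i) a i k) * (\prod_(i | cyc_arrow o i j) a i k.+1).

(* Main.v *)
Require Import Defs.
From HB Require Import structures.
From mathcomp Require Import all_boot all_order all_algebra.
From Stdlib Require Import Ring Field Lia.
Import Order.TTheory GRing.Theory Num.Theory.

Module P1.
Set Implicit Arguments. Unset Strict Implicit. Unset Printing Implicit Defensive.
Import Order.TTheory GRing.Theory Num.Theory.
Local Open Scope ring_scope.

Lemma nn0 n : nonneg_coefs (0 : mpoly n).
Proof. by case: n => [|n] //=; rewrite polyseq0. Qed.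

Lemma nnP n (p : {poly mpoly n}) :
  reflect (forall i, nonneg_coefs (p`_i : mpoly n)) (@nonneg_coefs n.+1 p).
Proof.
apply: (iffP (all_nthP 0)) => H i; first last.
  by move=> _; apply: H.
case: (ltnP i (size p)) => hi; first exact: H.
by rewrite nth_default // nn0.
Qed.

Lemma nnD n (p q : mpoly n) : nonneg_coefs p -> nonneg_coefs q -> nonneg_coefs (p + q).
Proof.
elim: n p q => [|n IH] p q /=; first exact: addr_ge0.
move=> /nnP hp /nnP hq; apply/nnP => i; rewrite coefD; exact: IH.
Qed.

Lemma nn_sum n (I : Type) (r : seq I) (P : pred I) (F : I -> mpoly n) :
  (forall i, P i -> nonneg_coefs (F i)) -> nonneg_coefs (\sum_(i <- r | P i) F i).
Proof. by move=> H; apply: (big_ind (@nonneg_coefs n)) => //; [exact: nn0|exact: nnD]. Qed.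

Lemma nnM n (p q : mpoly n) : nonneg_coefs p -> nonneg_coefs q -> nonneg_coefs (p * q).
Proof.
elim: n p q => [|n IH] p q /=; first exact: mulr_ge0.
move=> /nnP hp /nnP hq; apply/nnP => i; rewrite coefM; apply: nn_sum => j _; exact: IH.
Qed.

Lemma nn1 n : nonneg_coefs (1 : mpoly n).
Proof.
elim: n => [|n IH] //=; apply/nnP => i; rewrite coef1; case: (i == 0)%N => //; exact: nn0.
Qed.

Lemma nnC n (c : mpoly n) : nonneg_coefs c -> @nonneg_coefs n.+1 (c%:P).
Proof. move=> h; apply/nnP => i; rewrite coefC; case: (i == 0)%N => //; exact: nn0. Qed.

Lemma nnX n : @nonneg_coefs n.+1 ('X : {poly mpoly n}).
Proof. apply/nnP => i; rewrite coefX; case: (i == 1)%N; [exact: nn1|exact: nn0]. Qed.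

Lemma nn_mvar n i : nonneg_coefs (mvar n i).
Proof.
elim: n i => [|n IH] i /=; first by [].
case: (i == n); [exact: nnX| exact: nnC].
Qed.

Lemma nn_prod n (I : Type) (r : seq I) (P : pred I) (F : I -> mpoly n) :
  (forall i, P i -> nonneg_coefs (F i)) -> nonneg_coefs (\prod_(i <- r | P i) F i).
Proof. by move=> H; apply: (big_ind (@nonneg_coefs n)) => //; [exact: nn1|exact: nnM]. Qed.

Lemma nnX_ n (p : mpoly n) k : nonneg_coefs p -> nonneg_coefs (p ^+ k).
Proof. move=> h; elim: k => [|k IH]; [exact: nn1| rewrite exprS; exact: nnM]. Qed.

Lemma nn_add_eq0 n (p q : mpoly n) : nonneg_coefs p -> nonneg_coefs q -> p + q = 0 -> p = 0.
Proof.
elim: n p q => [|n IH] p q /=.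
  by move=> hp hq /eqP; rewrite paddr_eq0 // => /andP [/eqP].
move=> /nnP hp /nnP hq hpq; apply/polyP => i; rewrite coef0.
apply: (IH _ (q`_i)) => //; by rewrite -coefD hpq coef0.
Qed.

Lemma mvar_neq0 n i : (i < n)%N -> mvar n i != 0.
Proof.
elim: n i => [|n IH] i //= hi.
case: ifP => [_|hne].
  apply/negP => /eqP h. have := congr1 (fun p : {poly mpoly n} => p`_1) h.
  rewrite coefX coef0 /= => /eqP; rewrite oner_eq0 //.
apply/negP => /eqP h. have := congr1 (fun p : {poly mpoly n} => p`_0) h.
rewrite coefC coef0 /= => /eqP; apply/negP; apply: IH.
rewrite ltn_neqAle hne /=; by rewrite -ltnS.
Qed.

End P1.
Import P1.

Module P2.
Set Implicit Arguments. Unset Strict Implicit. Unset Printing Implicit Defensive.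
Import Order.TTheory GRing.Theory Num.Theory.
Local Open Scope ring_scope.

Section KS.
Variable n : nat.
Local Notation R := (ratfun n).
Local Notation tf := (@FracField.tofrac (mpoly n)).

Definition mon (e : 'I_n -> nat) : R := \prod_(i < n) zvar i ^+ e i.
Definition pmon (e : 'I_n -> nat) : mpoly n := \prod_(i < n) mvar n i ^+ e i.

Lemma zvar_neq0 (i : 'I_n) : zvar i != 0.
Proof. by rewrite /zvar tofrac_eq0 mvar_neq0. Qed.

Lemma mon_neq0 e : mon e != 0.
Proof. by apply/prodf_neq0 => i _; rewrite expf_neq0 // zvar_neq0. Qed.

Lemma nn_pmon e : nonneg_coefs (pmon e).
Proof. apply: nn_prod => i _; apply: nnX_; exact: nn_mvar. Qed.

Lemma tf_pmon e : tf (pmon e) = mon e.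
Proof. rewrite /pmon rmorph_prod; apply: eq_bigr => i _; by rewrite rmorphXn. Qed.

Lemma mon_add e f : mon (fun i => (e i + f i)%N) = mon e * mon f.
Proof. rewrite /mon -big_split /=; apply: eq_bigr => i _; exact: exprD. Qed.

Lemma mon0 : mon (fun _ => 0%N) = 1.
Proof. rewrite /mon; exact: big1. Qed.

Lemma K0 : in_K (0 : R).
Proof. exists 0, (fun _ => 0%N); split; [exact: nn0| by rewrite rmorph0 mul0r]. Qed.

Lemma K1 : in_K (1 : R).
Proof. exists 1, (fun _ => 0%N); split; [exact: nn1| by rewrite rmorph1 -/(mon _) mon0 divr1]. Qed.

Lemma KM (x y : R) : in_K x -> in_K y -> in_K (x * y).
Proof.
move=> [p [e [hp ->]]] [q [f [hq ->]]].
exists (p * q), (fun i => (e i + f i)%N); split; first exact: nnM.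
rewrite tofracM mulf_div; congr (_ / _); rewrite -[RHS]/(mon _) mon_add //.
Qed.

Lemma KD (x y : R) : in_K x -> in_K y -> in_K (x + y).
Proof.
move=> [p [e [hp ->]]] [q [f [hq ->]]].
exists (p * pmon f + q * pmon e), (fun i => (e i + f i)%N); split.
  by apply: nnD; apply: nnM => //; exact: nn_pmon.
rewrite -/(mon e) -/(mon f) addf_div ?mon_neq0 //; congr (_ / _).
  by rewrite tofracD !tofracM !tf_pmon.
by rewrite -[RHS]/(mon _) mon_add.
Qed.

Lemma Kz (i : 'I_n) : in_K (zvar i).
Proof.
exists (mvar n i), (fun _ => 0%N); split; first exact: nn_mvar.
by rewrite -/(mon _) mon0 divr1.
Qed.

Lemma Kzinv (i : 'I_n) : in_K ((zvar i)^-1).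
Proof.
exists 1, (fun k => (k == i)%N : nat); split; first exact: nn1.
rewrite rmorph1 mul1r; congr (_^-1).
rewrite (bigD1 i) //= eqxx expr1 big1 ?mulr1 // => k /negbTE ->; exact: expr0.
Qed.

Definition Kp (x : R) : Prop :=
  exists (p : mpoly n) (e : 'I_n -> nat),
    [/\ nonneg_coefs p, p != 0 & x = tf p / mon e].

Lemma Kp_K x : Kp x -> in_K x.
Proof. by move=> [p [e [h1 _ h3]]]; exists p, e. Qed.

Lemma Kp_neq0 x : Kp x -> x != 0.
Proof.
move=> [p [e [_ hp ->]]]; rewrite mulf_neq0 ?invr_eq0 ?mon_neq0 //.
by rewrite tofrac_eq0.
Qed.

Lemma Kp1 : Kp 1.
Proof.
exists 1, (fun _ => 0%N); split; [exact: nn1| exact: oner_neq0 | by rewrite rmorph1 mon0 divr1].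
Qed.

Lemma KpM (x y : R) : Kp x -> Kp y -> Kp (x * y).
Proof.
move=> [p [e [hp hp0 ->]]] [q [f [hq hq0 ->]]].
exists (p * q), (fun i => (e i + f i)%N); split; first exact: nnM.
  exact: mulf_neq0.
by rewrite tofracM mulf_div mon_add.
Qed.

Lemma KpD (x y : R) : Kp x -> in_K y -> Kp (x + y).
Proof.
move=> [p [e [hp hp0 ->]]] [q [f [hq ->]]].
exists (p * pmon f + q * pmon e), (fun i => (e i + f i)%N); split.
- by apply: nnD; apply: nnM => //; exact: nn_pmon.
- apply/negP => /eqP h.
  have h1 := nn_add_eq0 (nnM hp (nn_pmon f)) (nnM hq (nn_pmon e)) h.
  move/eqP: h1; rewrite mulf_eq0 (negbTE hp0) /=.
  apply/negP; rewrite -(tofrac_eq0 (R:=mpoly n)) tf_pmon; exact: mon_neq0.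
rewrite addf_div ?mon_neq0 // mon_add.
by rewrite tofracD !tofracM !tf_pmon.
Qed.

Lemma Kpz (i : 'I_n) : Kp (zvar i).
Proof.
exists (mvar n i), (fun _ => 0%N); split; first exact: nn_mvar.
  by apply: mvar_neq0.
by rewrite mon0 divr1.
Qed.

Lemma Kpzinv (i : 'I_n) : Kp ((zvar i)^-1).
Proof.
exists 1, (fun k => (k == i)%N : nat); split; [exact: nn1|exact: oner_neq0|].
rewrite rmorph1 mul1r; congr (_^-1).
rewrite /mon (bigD1 i) //= eqxx expr1 big1 ?mulr1 // => k /negbTE ->; exact: expr0.
Qed.

End KS.

End P2.
Import P2.

Module P3.
Set Implicit Arguments. Unset Strict Implicit. Unset Printing Implicit Defensive.
Import Order.TTheory GRing.Theory Num.Theory.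
Local Open Scope ring_scope.

Lemma K_bool n (b : bool) : in_K (b%:R : ratfun n).
Proof. case: b; [exact: K1|exact: K0]. Qed.

Section Auto.
Variables (n : nat) (Ph I : finType) (ph0 : Ph) (i0 : I) (nxt : Ph -> Ph).
Variables (L : Ph -> I -> I -> ratfun n) (lam : Ph -> I -> ratfun n).
Variables (v : nat -> I -> ratfun n) (a : nat -> ratfun n).
Hypotheses (hL : forall p i j, in_K (L p i j)) (hlam : forall p i, in_K (lam p i)).
Hypothesis (hv0 : forall i, in_K (v 0%N i)).
Hypothesis (hv : forall k i, v k.+1 i = \sum_j L (iter k nxt ph0) i j * v k j).
Hypothesis (ha : forall k, a k = \sum_i lam (iter k nxt ph0) i * v k i).

Local Notation J := (Ph * I)%type.
Let Mf (x y : J) : ratfun n := (x.1 == nxt y.1)%:R * L y.1 x.2 y.2.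
Let gf (y : J) : ratfun n := (y.1 == ph0)%:R * v 0%N y.2.
Let lf (x : J) : ratfun n := lam x.1 x.2.
Let w k (x : J) : ratfun n := (x.1 == iter k nxt ph0)%:R * v k x.2.

Lemma w_step k x : w k.+1 x = \sum_y Mf x y * w k y.
Proof.
rewrite /w /Mf -(pair_big xpredT xpredT (fun p j => (x.1 == nxt p)%:R * L p x.2 j *
   ((p == iter k nxt ph0)%:R * v k j))) /=.
rewrite (bigD1 (iter k nxt ph0)) //= [X in _ + X]big1 ?addr0; last first.
  move=> p /negbTE hp; apply: big1 => j _; by rewrite hp mul0r mulr0.
rewrite eqxx hv big_distrr /=; apply: eq_bigr => j _.
by rewrite mul1r mulrA.
Qed.

Lemma a_w k : a k = \sum_x lf x * w k x.
Proof.
rewrite ha /w /lf -(pair_big xpredT xpredT (fun p j => lam p j *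
   ((p == iter k nxt ph0)%:R * v k j))) /=.
rewrite (bigD1 (iter k nxt ph0)) //= [X in _ + X]big1 ?addr0; last first.
  move=> p /negbTE hp; apply: big1 => j _; by rewrite hp mul0r mulr0.
by apply: eq_bigr => j _; rewrite eqxx mul1r.
Qed.

Lemma automaton_rat : K_rational a.
Proof.
have cpos : (0 < #|{: J}|)%N by apply/card_gt0P; exists (ph0, i0).
set r := (#|{: J}|).-1.
have Hc : r.+1 = #|{: J}| by rewrite /r prednK.
pose f (k : 'I_r.+1) : J := enum_val (cast_ord Hc k).
pose g (x : J) : 'I_r.+1 := cast_ord (esym Hc) (enum_rank x).
have fK : cancel f g by move=> k; rewrite /f /g enum_valK cast_ordK.
have gK : cancel g f by move=> x; rewrite /f /g cast_ordKV enum_rankK.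
have reidx : forall F : J -> ratfun n, \sum_(x : J) F x = \sum_(k < r.+1) F (f k).
  move=> F; rewrite (reindex f) //; apply: onW_bij; exact: (Bijective fK gK).
exists r, (\row_k lf (f k)), (\matrix_(i, j) Mf (f i) (f j)), (\col_k gf (f k)).
split; [|split; [|split]].
- by move=> j; rewrite mxE; exact: hlam.
- move=> i j; rewrite mxE /Mf; apply: KM; [exact: K_bool| exact: hL].
- move=> i; rewrite mxE /gf; apply: KM; [exact: K_bool| exact: hv0].
have key : forall k i, ((\matrix_(i, j) Mf (f i) (f j)) ^+ k *m (\col_k gf (f k))) i 0 = w k (f i).
  elim=> [|k IH] i.
    by rewrite expr0 mul1mx mxE /gf /w /=.
  rewrite exprS -mulmxE -mulmxA mxE w_step reidx; apply: eq_bigr => j _.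
  by rewrite mxE IH.
move=> k; rewrite -mulmxA mxE a_w reidx; apply: eq_bigr => j _.
by rewrite key mxE.
Qed.
End Auto.

End P3.
Import P3.

Module P4.
Set Implicit Arguments. Unset Strict Implicit. Unset Printing Implicit Defensive.
Import Order.TTheory GRing.Theory Num.Theory.
Local Open Scope ring_scope.

Section Wrap.
Variable F : fieldType.
Definition fadd (x y : F) : F := x + y.
Definition fmul (x y : F) : F := x * y.
Definition fopp (x : F) : F := - x.
Definition fsub (x y : F) : F := x - y.
Definition finv (x : F) : F := x^-1.
Definition fdiv (x y : F) : F := x / y.
Definition fzero : F := 0.
Definition fone : F := 1.
Lemma wFT : @field_theory F fzero fone fadd fmul fsub fopp fdiv finv eq.
Proof. split=> //=. split; rewrite /fadd/fmul/fsub/fopp/fzero/fone.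
 exact: add0r. exact: addrC. exact: addrA. exact: mul1r. exact: mulrC. exact: mulrA. exact: mulrDl. done. exact: subrr.
 by apply/eqP; rewrite /fzero/fone oner_eq0. by move=> p /eqP; rewrite /finv/fmul/fzero/fone; apply: mulVf. Qed.
Add Field wField : wFT.

Lemma w_assoc11 (a1 b1 c1 d1 a2 b2 c2 d2 a3 b3 c3 d3 : F) :
  fadd (fmul (fadd (fmul a1 a2) (fmul b1 c2)) a3) (fmul (fadd (fmul a1 b2) (fmul b1 d2)) c3)
  = fadd (fmul a1 (fadd (fmul a2 a3) (fmul b2 c3))) (fmul b1 (fadd (fmul c2 a3) (fmul d2 c3))).
Proof. ring. Qed.

Lemma assoc11 (a1 b1 c1 d1 a2 b2 c2 d2 a3 b3 c3 d3 : F) :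
  (a1 * a2 + b1 * c2) * a3 + (a1 * b2 + b1 * d2) * c3
  = a1 * (a2 * a3 + b2 * c3) + b1 * (c2 * a3 + d2 * c3).
Proof. exact: (w_assoc11 a1 b1 c1 d1). Qed.
End Wrap.

Section M2.
Variable F : fieldType.
Add Field wField2 : (wFT F).

Record m2 := M2 { e11 : F; e12 : F; e21 : F; e22 : F }.
Definition mmul (A B : m2) : m2 :=
  M2 (e11 A * e11 B + e12 A * e21 B) (e11 A * e12 B + e12 A * e22 B)
     (e21 A * e11 B + e22 A * e21 B) (e21 A * e12 B + e22 A * e22 B).
Definition mone : m2 := M2 1 0 0 1.
Definition mdet (A : m2) : F := e11 A * e22 A - e12 A * e21 A.

Lemma mmulA A B C : mmul A (mmul B C) = mmul (mmul A B) C.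
Proof.
case: A B C => [a1 b1 c1 d1] [a2 b2 c2 d2] [a3 b3 c3 d3]; rewrite /mmul /=.
by congr M2; symmetry; apply: (assoc11 _ _ c1 d1 _ _ _ _ _ b3 _ d3).
Qed.

Lemma mmul1m A : mmul mone A = A.
Proof. case: A => a b c d; rewrite /mmul /=; congr M2; by rewrite mul1r mul0r ?addr0 ?add0r. Qed.

Lemma mmulm1 A : mmul A mone = A.
Proof. case: A => a b c d; rewrite /mmul /=; congr M2; by rewrite mulr1 mulr0 ?addr0 ?add0r. Qed.

Lemma w_det (a1 b1 c1 d1 a2 b2 c2 d2 : F) :
  fsub (fmul (fadd (fmul a1 a2) (fmul b1 c2)) (fadd (fmul c1 b2) (fmul d1 d2)))
       (fmul (fadd (fmul a1 b2) (fmul b1 d2)) (fadd (fmul c1 a2) (fmul d1 c2)))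
  = fmul (fsub (fmul a1 d1) (fmul b1 c1)) (fsub (fmul a2 d2) (fmul b2 c2)).
Proof. ring. Qed.

Lemma mdetM A B : mdet (mmul A B) = mdet A * mdet B.
Proof.
case: A B => [a1 b1 c1 d1] [a2 b2 c2 d2]; rewrite /mdet /mmul /=.
exact: w_det.
Qed.

Lemma fracK (a b c : F) : b != 0 -> (b / a) * (c / b) = c / a.
Proof. by move=> hb; rewrite mulrC mulrA divfK. Qed.

Variables (x : nat -> F) (st : nat -> bool).
Hypothesis hx : forall i, x i != 0.

Definition T (i : nat) : m2 :=
  if st i then M2 (x i.+1 / x i) 0 (x i)^-1 1 else M2 1 (x i)^-1 0 (x i.+1 / x i).

Fixpoint Pi (p d : nat) : m2 :=
  if d is d'.+1 then mmul (Pi p d') (T (p + d')) else mone.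

Definition G p d := x p * e11 (Pi p d).

Lemma Pi_split p d k : Pi p (d + k) = mmul (Pi p d) (Pi (p + d) k).
Proof.
elim: k => [|k IH]; first by rewrite addn0 /= mmulm1.
by rewrite addnS /= IH -mmulA addnA.
Qed.

Lemma Pi_S_left p d : Pi p d.+1 = mmul (T p) (Pi p.+1 d).
Proof. by rewrite -add1n Pi_split /= addn1 addn0 mmul1m. Qed.

Lemma G0 p : G p 0 = x p.
Proof. by rewrite /G /= mulr1. Qed.

Lemma Pi_D p k : (forall t, (t < k)%N -> st (p + t) = false) ->
  e11 (Pi p k) = 1 /\ e21 (Pi p k) = 0.
Proof.
elim: k => [|k IH] h /=; first by [].
have [h1 h2] := IH (fun t ht => h t (ltnW ht)).
rewrite /T h //= h1 h2; split; by rewrite ?mulr1 ?mulr0 ?addr0 ?mul0r ?add0r.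
Qed.

Lemma G_right p d k : (forall t, (t < k)%N -> st (p + d + t) = false) ->
  G p (d + k) = G p d.
Proof.
move=> h; rewrite /G Pi_split; have [h1 h2] := Pi_D h.
by rewrite /mmul /= h1 h2 mulr1 mulr0 addr0.
Qed.

Lemma Pi_R p k : (forall t, (t < k)%N -> st (p + t) = true) ->
  e11 (Pi p k) = x (p + k) / x p /\ e12 (Pi p k) = 0.
Proof.
elim: k => [|k IH] h /=; first by rewrite addn0 divff.
have [h1 h2] := IH (fun t ht => h t (ltnW ht)).
rewrite /T h //= h1 h2 addnS; split; last by rewrite mulr0 mul0r addr0.
by rewrite mul0r addr0 fracK.
Qed.

Lemma G_left p d k : (forall t, (t < k)%N -> st (p + t) = true) ->
  G p (k + d) = G (p + k) d.
Proof.
move=> h; rewrite /G Pi_split; have [h1 h2] := Pi_R h.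
by rewrite /mmul /= h1 h2 mul0r addr0 mulrA [x p * _]mulrC divfK.
Qed.

Lemma mdetT i : mdet (T i) = x i.+1 / x i.
Proof. rewrite /mdet /T; case: (st i) => /=; by rewrite ?mulr1 ?mul1r ?mulr0 ?mul0r subr0. Qed.

Lemma mdetPi p d : mdet (Pi p d) = x (p + d) / x p.
Proof.
elim: d => [|d IH] /=; first by rewrite /mdet /= addn0 mulr1 mulr0 subr0 divff.
by rewrite mdetM IH mdetT addnS fracK.
Qed.

Lemma w_diamond (a b c e m11 m12 m21 m22 : F) : a <> fzero F -> c <> fzero F ->
  fmul (fmul b m11) (fmul a (fadd (fmul (fone F) (fadd (fmul m11 (fdiv e c)) (fmul m12 (finv c))))
                                  (fmul (finv a) (fadd (fmul m21 (fdiv e c)) (fmul m22 (finv c))))))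
  = fadd (fmul (fdiv b c) (fsub (fmul m11 m22) (fmul m12 m21)))
         (fmul (fmul b (fadd (fmul m11 (fdiv e c)) (fmul m12 (finv c))))
               (fmul a (fadd (fmul (fone F) m11) (fmul (finv a) m21)))).
Proof. move=> ha hc. field. split; assumption. Qed.

Lemma diamond q d : st q = false -> st (q.+1 + d) = true ->
  G q.+1 d * G q d.+2 = 1 + G q.+1 d.+1 * G q d.+1.
Proof.
move=> hq hr.
rewrite /G (Pi_S_left q d.+1) (Pi_S_left q d) /=.
have hdet := mdetPi q.+1 d.
move: (Pi q.+1 d) hdet => [m11 m12 m21 m22] hdet.
rewrite /mmul /T hq hr /= in hdet *.
have := (@w_diamond (x q) (x q.+1) (x (q.+1+d)) (x (q.+1+d).+1) m11 m12 m21 m22).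
rewrite /fadd /fmul /fsub /fdiv /finv /fone => ->; try by apply/eqP; apply: hx.
rewrite /mdet /= in hdet.
by rewrite hdet fracK ?hx // divff ?hx.
Qed.
End M2.

Section Per.
Variable F : fieldType.
Add Field wField3 : (wFT F).
Variables (x : nat -> F) (st : nat -> bool) (N : nat).
Hypothesis hxN : forall i, x (i + N) = x i.
Hypothesis hsN : forall i, st (i + N) = st i.

Lemma T_N i : T x st (i + N) = T x st i.
Proof. by rewrite /T hsN -addSn !hxN. Qed.

Lemma Pi_N p d : Pi x st (p + N) d = Pi x st p d.
Proof. elim: d => [|d IH] //=; by rewrite IH addnAC T_N. Qed.

Lemma Pi_NK p k d : Pi x st (p + N * k) d = Pi x st p d.
Proof. elim: k => [|k IH]; first by rewrite muln0 addn0. by rewrite mulnS addnCA addnC Pi_N. Qed.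

Lemma G_NK p k d : G x st (p + N * k) d = G x st p d.
Proof.
rewrite /G Pi_NK; congr (_ * _); elim: k => [|k IH]; first by rewrite muln0 addn0.
by rewrite mulnS addnCA addnC hxN.
Qed.

Lemma x_NK p k : x (p + N * k) = x p.
Proof. elim: k => [|k IH]; first by rewrite muln0 addn0. by rewrite mulnS addnCA addnC hxN. Qed.

Lemma st_NK p k : st (p + N * k) = st p.
Proof. elim: k => [|k IH]; first by rewrite muln0 addn0. by rewrite mulnS addnCA addnC hsN. Qed.
End Per.

Section Ent.
Variable F : fieldType.
Add Field wField4 : (wFT F).
Definition ent (A : m2 F) (b1 b2 : bool) : F :=
  if b1 then (if b2 then e11 A else e12 A) else (if b2 then e21 A else e22 A).

Lemma w_conj (a1 a2 b1 b2 x11 x12 x21 x22 : F) :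
  fadd (fmul (fadd (fmul a1 x11) (fmul a2 x21)) b1) (fmul (fadd (fmul a1 x12) (fmul a2 x22)) b2)
  = fadd (fadd (fmul (fmul a1 b1) x11) (fmul (fmul a1 b2) x12))
         (fadd (fmul (fmul a2 b1) x21) (fmul (fmul a2 b2) x22)).
Proof. ring. Qed.

Lemma ent_conj (A X B : m2 F) c1 c2 :
  ent (mmul (mmul A X) B) c1 c2 =
  \sum_(y : bool * bool) (ent A c1 y.1 * ent B y.2 c2) * ent X y.1 y.2.
Proof.
rewrite -(pair_bigA _ (fun i j => (ent A c1 i * ent B j c2) * ent X i j)) /= !big_bool /=.
by case: c1; case: c2; rewrite /ent /mmul /=; apply: w_conj.
Qed.
End Ent.

End P4.
Import P4.

Module P5.
Set Implicit Arguments. Unset Strict Implicit. Unset Printing Implicit Defensive.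
Import Order.TTheory GRing.Theory Num.Theory.


Ltac nlia := rewrite -?plusE -?multE -?minusE; nia.

Section Frieze.
Variables (m : nat) (o : 'I_m.+1 -> bool).
Hypothesis hR : exists i, o i.
Hypothesis hD : exists i, ~~ o i.
Local Notation N := m.+1.

Definition ph (i : nat) : 'I_m.+1 := Ordinal (ltn_pmod i (ltn0Sn m)).
Definition xs (i : nat) : ratfun m.+1 := zvar (ph i).
Definition sts (i : nat) : bool := o (ph i).

Lemma ph_N i : ph (i + N) = ph i.
Proof. by apply: val_inj; rewrite /= modnDr. Qed.

Lemma xs_N i : xs (i + N) = xs i. Proof. by rewrite /xs ph_N. Qed.
Lemma sts_N i : sts (i + N) = sts i. Proof. by rewrite /sts ph_N. Qed.
Lemma xs_neq0 i : xs i != 0%R. Proof. exact: zvar_neq0. Qed.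

Lemma ph_small (j : 'I_m.+1) : ph j = j.
Proof. by apply: val_inj; rewrite /= modn_small. Qed.

Lemma existsR e : exists c, sts (e + c).
Proof.
case: hR => i0 hi0; exists (i0 + N - e %% N); rewrite /sts.
suff -> : ph (e + (i0 + N - e %% N)) = i0 by [].
apply: val_inj => /=.
have h1 : (e %% N < N) := ltn_pmod e (ltn0Sn m).
have h2 : (i0 < N) := ltn_ord i0.
rewrite {1}(divn_eq e N).
have -> : (e %/ N * N + e %% N + (i0 + N - e %% N) = (e %/ N).+1 * N + i0).
  move: h1 h2; set a := e %/ N; set b := e %% N; move=> /ssrnat.ltP h1 /ssrnat.ltP h2. nlia.
by rewrite modnMDl modn_small.
Qed.

Lemma existsL q : exists c, ~~ sts (q + m * c.+1).
Proof.
case: hD => i1 hi1.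
have h1 : (q %% N < N) := ltn_pmod q (ltn0Sn m).
have h2 : (i1 < N) := ltn_ord i1.
exists (q %% N + N - i1).-1; rewrite /sts.
suff -> : ph (q + m * (q %% N + N - i1).-1.+1) = i1 by [].
apply: val_inj => /=.
have hk : ((q %% N + N - i1).-1.+1 = q %% N + N - i1).
  apply: prednK; move: h2 => /ssrnat.ltP h2; apply/ssrnat.ltP; nlia.
rewrite hk.
set k := (q %% N + N - i1).
have e1 : (q + m * k + k = k * N + q) by nlia.
have e2 : (i1 + k = q %% N + N).
  rewrite /k; move: h2 => /ssrnat.ltP h2; nlia.
have : (q + m * k + k == i1 + k %[mod N]).
  by rewrite e1 e2 modnMDl modnDr modn_mod.
rewrite eqn_modDr => /eqP ->; by rewrite modn_small.
Qed.

Definition cR (e : nat) : nat := ex_minn (existsR e).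
Definition cL (q : nat) : nat := ex_minn (existsL q).

Lemma cR_spec e : sts (e + cR e) /\ forall t, (t < cR e) -> sts (e + t) = false.
Proof.
rewrite /cR; case: ex_minnP => c hc hmin; split => // t ht.
apply/negP => h; have := hmin t h; rewrite leqNgt ht //.
Qed.

Lemma cL_spec q : sts (q + m * (cL q).+1) = false /\
  forall t, (t < cL q) -> sts (q + m * t.+1).
Proof.
rewrite /cL; case: ex_minnP => c hc hmin; split; first exact: negbTE.
move=> t ht; apply/negPn/negP => h; have := hmin t h; rewrite leqNgt ht //.
Qed.

Lemma cR_uniq e c : sts (e + c) -> (forall t, (t < c) -> sts (e + t) = false) -> cR e = c.
Proof.
move=> h1 h2; have [h3 h4] := cR_spec e.
case: (ltngtP (cR e) c) => // hc.
  by move: (h2 _ hc); rewrite h3.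
by move: (h4 _ hc); rewrite h1.
Qed.

Lemma cL_uniq q c : sts (q + m * c.+1) = false -> (forall t, (t < c) -> sts (q + m * t.+1)) -> cL q = c.
Proof.
move=> h1 h2; have [h3 h4] := cL_spec q.
case: (ltngtP (cL q) c) => // hc.
  by move: (h2 _ hc); rewrite h3.
by move: (h4 _ hc); rewrite h1.
Qed.

Lemma cR_N e : cR (e + N) = cR e.
Proof.
have [h1 h2] := cR_spec e; apply: cR_uniq; first by rewrite addnAC sts_N.
by move=> t ht; rewrite addnAC sts_N h2.
Qed.

Lemma cL_N q : cL (q + N) = cL q.
Proof.
have [h1 h2] := cL_spec q; apply: cL_uniq; first by rewrite addnAC sts_N.
by move=> t ht; rewrite addnAC sts_N h2.
Qed.

Fixpoint lam (j n : nat) : nat :=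
  if n is n'.+1 then (lam j n' + 1 + cL (j + m * (lam j n').+1)) else cL j.
Fixpoint rho (j n : nat) : nat :=
  if n is n'.+1 then (rho j n' + 1 + cR (j + rho j n' + 1)) else cR j.

Definition GG := G xs sts.
Definition Av (j n : nat) := GG (j + m * lam j n) (lam j n + rho j n).

Lemma GG_NK p k d : GG (p + N * k) d = GG p d.
Proof. apply: G_NK; [exact: xs_N|exact: sts_N]. Qed.
Lemma sts_NK p k : sts (p + N * k) = sts p.
Proof. apply: st_NK; exact: sts_N. Qed.

Lemma inv_left j n : sts (j + m * (lam j n).+1) = false.
Proof.
case: n => [|n] /=; first by case: (cL_spec j).
have [h _] := cL_spec (j + m * (lam j n).+1).
by rewrite -h; congr sts; nlia.
Qed.

Lemma inv_right j n : sts (j + rho j n).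
Proof.
case: n => [|n] /=; first by case: (cR_spec j).
have [h _] := cR_spec (j + rho j n + 1).
by move: h; rewrite (_ : j + rho j n + 1 + _ = j + (rho j n + 1 + cR (j + rho j n + 1))) //; nlia.
Qed.

Lemma left_absorb q L : GG (q + m * cL q) (cL q + L) = GG q L.
Proof.
rewrite /GG (@G_left _ xs sts xs_neq0 (q + m * cL q) L (cL q)).
  rewrite (_ : q + m * cL q + cL q = q + N * cL q); last nlia.
  exact: GG_NK.
move=> t ht; have [_ h] := cL_spec q.
have := h (cL q - t - 1) ltac:(move: ht => /ssrnat.ltP ht; apply/ssrnat.ltP; nlia).
rewrite -(sts_NK _ t) (_ : q + m * (cL q - t - 1).+1 + N * t = q + m * cL q + t) //.
move: ht => /ssrnat.ltP ht; nlia.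
Qed.


Lemma Av_step j n :
  let q := j + m * (lam j n).+1 in Av j n.+1 = GG q (lam j n + rho j n).+2.
Proof.
move=> q; rewrite /Av /=.
set c := cL q; set c' := cR (j + rho j n + 1).
rewrite (_ : j + m * (lam j n + 1 + c) = q + m * c); last by rewrite /q; nlia.
rewrite (_ : lam j n + 1 + c + (rho j n + 1 + c') = c + ((lam j n + rho j n).+2 + c')); last by nlia.
rewrite left_absorb /GG (@G_right _ xs sts q _ c') //.
move=> t ht; have [_ h] := cR_spec (j + rho j n + 1).
rewrite (_ : q + _ + t = (j + rho j n + 1 + t) + N * (lam j n).+1); last by rewrite /q; nlia.
by rewrite sts_NK h.
Qed.

Lemma Av_N1 j n :
  GG (j + m * lam j n) (lam j n + rho j n.+1) = GG (j + m * lam j n) (lam j n + rho j n).+1.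
Proof.
rewrite /= (_ : lam j n + (rho j n + 1 + cR (j + rho j n + 1)) = (lam j n + rho j n).+1 + cR (j + rho j n + 1)); last by nlia.
rewrite /GG (@G_right _ xs sts _ _ _) //.
move=> t ht; have [_ h] := cR_spec (j + rho j n + 1).
rewrite (_ : _ + _ + t = (j + rho j n + 1 + t) + N * (lam j n)); last by nlia.
by rewrite sts_NK h.
Qed.

Lemma Av_N2 j n :
  let q := j + m * (lam j n).+1 in
  GG (j + m * lam j n.+1) (lam j n.+1 + rho j n) = GG q (lam j n + rho j n).+1.
Proof.
move=> q; rewrite /=.
rewrite (_ : j + m * (lam j n + 1 + cL q) = q + m * cL q); last by rewrite /q; nlia.
rewrite (_ : lam j n + 1 + cL q + rho j n = cL q + (lam j n + rho j n).+1); last by nlia.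
exact: left_absorb.
Qed.

Lemma Av_diamond j n :
  let q := j + m * (lam j n).+1 in
  (Av j n * Av j n.+1 = 1 + GG (j + m * lam j n) (lam j n + rho j n).+1 * GG q (lam j n + rho j n).+1)%R.
Proof.
move=> q; rewrite Av_step -/q /Av.
have hq : q.+1 = j + m * lam j n + N * 1 by rewrite /q; nlia.
rewrite -!(GG_NK (j + m * lam j n) 1) -hq.
apply: (@diamond _ xs sts xs_neq0 q (lam j n + rho j n)).
  exact: inv_left.
rewrite (_ : q.+1 + (lam j n + rho j n) = j + rho j n + N * (lam j n).+1); last by rewrite /q; nlia.
by rewrite sts_NK inv_right.
Qed.

Lemma Av0 j : Av j 0 = xs j.
Proof.
rewrite /Av /= -[X in GG _ X]addn0 -addnA left_absorb /GG.
rewrite addn0 -[cR j]add0n (@G_right _ xs sts j 0 (cR j)) ?G0 //.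
move=> t ht; have [_ h] := cR_spec j; by rewrite addn0 h.
Qed.

Lemma cR_a e : sts e -> cR e = 0.
Proof. move=> h; apply: cR_uniq => //; by rewrite addn0. Qed.

Lemma cR_b e : sts e = false -> cR e = (cR e.+1).+1.
Proof.
move=> h; have [h1 h2] := cR_spec e.+1; apply: cR_uniq; first by rewrite addnS -addSn.
by case=> [|t] ht; [rewrite addn0 | rewrite addnS -addSn h2].
Qed.

Lemma cL_c q : sts (q + m) -> cL q = (cL (q + m)).+1.
Proof.
move=> h; have [h1 h2] := cL_spec (q + m); apply: cL_uniq.
  by rewrite -h1; congr sts; nlia.
case=> [|t] ht; first by rewrite muln1.
by rewrite (_ : q + m * t.+2 = q + m + m * t.+1) ?h2 //; nlia.
Qed.

Lemma cL_d q : sts (q + m) = false -> cL q = 0.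
Proof. by move=> h; apply: cL_uniq => //; rewrite muln1. Qed.

Lemma sts_jN j : sts (j.+1 + m) = sts j.
Proof. by rewrite addSnnS sts_N. Qed.

Lemma lamS j n : lam j n.+1 = (lam j n + 1 + cL (j + m * (lam j n).+1))%N.
Proof. by []. Qed.
Lemma rhoS j n : rho j n.+1 = (rho j n + 1 + cR (j + rho j n + 1))%N.
Proof. by []. Qed.

Section CaseA.
Variable j : nat.
Hypothesis hj : sts j.
Lemma A_lam n : lam j.+1 n = (lam j n).+1.
Proof.
elim: n => [|n IH].
  by rewrite /= cL_c ?sts_jN // addSnnS cL_N.
rewrite (lamS j.+1 n) (lamS j n) IH.
rewrite (_ : j.+1 + m * (lam j n).+2 = j + m * (lam j n).+1 + N); last by nlia.
by rewrite cL_N; nlia.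
Qed.
Lemma A_rho n : (rho j.+1 n + 1 = rho j n.+1)%N.
Proof.
elim: n => [|n IH]; first by rewrite /= (cR_a hj) (_ : j + 0 + 1 = j.+1); nlia.
rewrite (rhoS j.+1 n) (rhoS j n.+1) -IH.
rewrite (_ : j + (rho j.+1 n + 1) + 1 = j.+1 + rho j.+1 n + 1); last by nlia.
nlia.
Qed.
Lemma A_nbr n : GG (j + m * lam j n) (lam j n + rho j n).+1 = Av j.+1 n.
Proof.
rewrite -Av_N1 /Av A_lam -A_rho.
rewrite (_ : j.+1 + m * (lam j n).+1 = j + m * lam j n + N * 1); last by nlia.
by rewrite GG_NK; congr GG; nlia.
Qed.
End CaseA.

Section CaseB.
Variable j : nat.
Hypothesis hj : sts j = false.
Lemma B_rho k : (rho j.+1 k + 1 = rho j k)%N.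
Proof.
elim: k => [|k IH]; first by rewrite /= (cR_b hj) addn1.
rewrite (rhoS j.+1 k) (rhoS j k) -IH.
rewrite (_ : j + (rho j.+1 k + 1) + 1 = j.+1 + rho j.+1 k + 1); last by nlia.
nlia.
Qed.
Lemma B_lam k : lam j.+1 k.+1 = (lam j k).+1.
Proof.
elim: k => [|k IH].
  rewrite /= (cL_d (q := j.+1)) ?sts_jN // muln1 addSnnS cL_N; nlia.
rewrite (lamS j.+1 k.+1) (lamS j k) IH.
rewrite (_ : j.+1 + m * (lam j k).+2 = j + m * (lam j k).+1 + N); last by nlia.
by rewrite cL_N; nlia.
Qed.
Lemma B_nbr n : GG (j + m * lam j n) (lam j n + rho j n).+1 = Av j.+1 n.+1.
Proof.
rewrite -Av_N1 /Av B_lam -(B_rho n.+1).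
rewrite (_ : j.+1 + m * (lam j n).+1 = j + m * lam j n + N * 1); last by nlia.
by rewrite GG_NK; congr GG; nlia.
Qed.
End CaseB.

Section CaseC.
Variable j : nat.
Hypothesis hj : sts (j + m).
Lemma C_lam k : ((lam (j + m) k).+1 = lam j k)%N.
Proof.
elim: k => [|k IH]; first by rewrite /= (cL_c hj).
rewrite (lamS (j + m) k) (lamS j k) -IH.
rewrite (_ : j + m * (lam (j + m) k).+2 = j + m + m * (lam (j + m) k).+1); last by nlia.
nlia.
Qed.
Lemma C_rho k : rho (j + m) k.+1 = (rho j k + 1)%N.
Proof.
elim: k => [|k IH].
  by rewrite /= (cR_a hj) add0n (_ : j + m + 0 + 1 = j + N) ?cR_N; nlia.
rewrite (rhoS (j + m) k.+1) (rhoS j k) IH.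
rewrite (_ : j + m + (rho j k + 1) + 1 = j + rho j k + 1 + N); last by nlia.
rewrite cR_N; nlia.
Qed.
Lemma C_nbr n :
  GG (j + m * (lam j n).+1) (lam j n + rho j n).+1 = Av (j + m) n.+1.
Proof.
rewrite -Av_N2 /Av -C_lam C_rho; congr GG; nlia.
Qed.
End CaseC.

Section CaseD.
Variable j : nat.
Hypothesis hj : sts (j + m) = false.
Lemma D_lam k : lam j k.+1 = (lam (j + m) k).+1.
Proof.
elim: k => [|k IH].
  rewrite /= (cL_d hj) muln1; nlia.
rewrite (lamS j k.+1) (lamS (j + m) k) IH.
rewrite (_ : j + m * (lam (j + m) k).+2 = j + m + m * (lam (j + m) k).+1); last by nlia.
nlia.
Qed.
Lemma D_rho k : rho (j + m) k = (rho j k).+1.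
Proof.
elim: k => [|k IH].
  by rewrite /= (cR_b hj) (_ : (j + m).+1 = j + N) ?cR_N; nlia.
rewrite (rhoS (j + m) k) (rhoS j k) IH.
rewrite (_ : j + m + (rho j k).+1 + 1 = j + rho j k + 1 + N); last by nlia.
rewrite cR_N; nlia.
Qed.
Lemma D_nbr n :
  GG (j + m * (lam j n).+1) (lam j n + rho j n).+1 = Av (j + m) n.
Proof.
rewrite -Av_N2 /Av D_lam D_rho; congr GG; nlia.
Qed.
End CaseD.
End Frieze.

End P5.
Import P5.

Module P6.
Set Implicit Arguments. Unset Strict Implicit. Unset Printing Implicit Defensive.
Import Order.TTheory GRing.Theory Num.Theory.

Section Orient.
Variables (m : nat) (o : 'I_m.+1 -> bool).
Local Notation N := m.+1.
Local Notation e := (cyc_arrow o).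

Lemma iter_ordS k (x : 'I_N) : val (iter k (@ordS N) x) = (x + k) %% N.
Proof.
elim: k => [|k IH]; first by rewrite addn0 modn_small.
by rewrite iterS /= IH -addn1 modnDml addn1 -addnS.
Qed.

Lemma iter_ordS_N (x : 'I_N) : iter N (@ordS N) x = x.
Proof. by apply: val_inj; rewrite iter_ordS modnDr modn_small. Qed.

Lemma iter_SP k (x : 'I_N) : iter k (@ordS N) (iter k (@ord_pred N) x) = x.
Proof.
elim: k x => [|k IH] x //.
by rewrite iterSr iterS ord_predK IH.
Qed.

Lemma iter_pred_N (x : 'I_N) : iter N (@ord_pred N) x = x.
Proof. by rewrite -{2}(iter_SP N x) iter_ordS_N. Qed.

Lemma connect_iter (f : 'I_N -> 'I_N) : (forall y, e y (f y)) ->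
  forall k x, connect e x (iter k f x).
Proof.
move=> h; elim=> [|k IH] x //=.
apply: connect_trans (IH x) _; exact: connect1.
Qed.

Hypothesis hacyc : acyclic_orientation o.

Lemma acyc_R : exists i, o i.
Proof.
case: (boolP [exists i, o i]) => [/existsP //|/existsPn hall]; exfalso.
move/negP: hacyc; apply; apply/existsP; exists (ordS ord0); apply/existsP; exists ord0.
apply/andP; split.
  by rewrite /cyc_arrow eqxx /= (hall _) orbT.
have h : forall y, e y (ord_pred y).
  by move=> y; rewrite /cyc_arrow ord_predK eqxx (hall _) orbT.
have := connect_iter h m ord0.
suff -> : iter m (@ord_pred N) ord0 = ordS ord0 by [].
by rewrite -[ordS ord0](iter_pred_N) iterSr ordSK.
Qed.

Lemma acyc_D : exists i, ~~ o i.
Proof.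
case: (boolP [exists i, ~~ o i]) => [/existsP //|/existsPn hall]; exfalso.
move/negP: hacyc; apply; apply/existsP; exists (ord_pred ord0); apply/existsP; exists ord0.
apply/andP; split.
  by rewrite /cyc_arrow ord_predK eqxx /= (negbNE (hall _)).
have h : forall y, e y (ordS y).
  by move=> y; rewrite /cyc_arrow eqxx (negbNE (hall _)).
have := connect_iter h m ord0.
suff -> : iter m (@ordS N) ord0 = ord_pred ord0 by [].
by rewrite -[ord_pred ord0](iter_ordS_N) iterSr ord_predK.
Qed.

Lemma acyc_ind (P : 'I_N -> Prop) :
  (forall j, (forall i, e i j -> P i) -> P j) -> forall j, P j.
Proof.
move=> H.
pose anc j := [set i | connect e i j].
suff : forall k j, #|anc j| <= k -> P j by move=> h j; exact: (h _ j (leqnn _)).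
elim=> [|k IH] j hk.
  have hj : j \in anc j by rewrite inE connect0.
  by rewrite leqn0 cards_eq0 in hk; rewrite (eqP hk) inE in hj.
apply: H => i hij; apply: IH.
have hp : anc i \proper anc j.
  apply/properP; split.
    apply/subsetP => y; rewrite !inE => hy.
    apply: connect_trans hy _; exact: connect1.
  exists j; first by rewrite inE connect0.
  rewrite inE; apply/negP => hji; move/negP: hacyc; apply.
  by apply/existsP; exists i; apply/existsP; exists j; rewrite hij hji.
by rewrite -ltnS; apply: leq_trans (proper_card hp) hk.
Qed.
End Orient.

End P6.
Import P6.

Module P7.
Set Implicit Arguments. Unset Strict Implicit. Unset Printing Implicit Defensive.
Import Order.TTheory GRing.Theory Num.Theory.

Ltac nlia := rewrite -?plusE -?multE -?minusE; nia.

Lemma prod_two (R : comNzRingType) (T : finType) (s p : T) (F : T -> R) (b1 b2 : bool) (P : pred T) :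
  s != p -> P =1 (fun i => ((i == s) && b1) || ((i == p) && b2)) ->
  (\prod_(i | P i) F i = (if b1 then F s else 1) * (if b2 then F p else 1))%R.
Proof.
move=> hsp hP; rewrite (bigID (pred1 s)) /=; congr (_ * _)%R.
  rewrite (eq_bigl (fun i => (i == s) && b1)); last first.
    move=> i; rewrite hP; case: (eqVneq i s) => [->|his] /=.
      by rewrite (negbTE hsp) andbT orbF.
    by rewrite !andbF.
  case: b1 hP => hP.
    by rewrite (eq_bigl (pred1 s)) ?big_pred1_eq // => i; rewrite andbT.
  by rewrite big_pred0 // => i; rewrite andbF.
rewrite (eq_bigl (fun i => (i == p) && b2)); last first.
  move=> i; rewrite hP; case: (eqVneq i s) => [->|his] /=.
    by rewrite (negbTE hsp) andbF.
  by rewrite andbT.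
case: b2 hP => hP.
  by rewrite (eq_bigl (pred1 p)) ?big_pred1_eq // => i; rewrite andbT.
by rewrite big_pred0 // => i; rewrite andbF.
Qed.

Section Main.
Variables (m : nat) (hm : (2 <= m)%N) (o : 'I_m.+1 -> bool).
Hypothesis hacyc : acyclic_orientation o.
Local Notation N := m.+1.
Let hR := acyc_R hacyc.
Let hD := acyc_D hacyc.
Local Notation Av := (Av hR hD).

Definition a0 (j : 'I_N) (n : nat) : ratfun N := Av j n.

Lemma lam_N j n : lam hD (j + N) n = lam hD j n.
Proof.
elim: n => [|n IH] /=; first exact: cL_N.
rewrite IH (_ : j + N + m * (lam hD j n).+1 = j + m * (lam hD j n).+1 + N); last by nlia.
by rewrite cL_N.
Qed.

Lemma rho_N j n : rho hR (j + N) n = rho hR j n.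
Proof.
elim: n => [|n IH] /=; first exact: cR_N.
rewrite IH (_ : j + N + rho hR j n + 1 = j + rho hR j n + 1 + N); last by nlia.
by rewrite cR_N.
Qed.

Lemma Av_N j n : Av (j + N) n = Av j n.
Proof.
rewrite /P5.Av lam_N rho_N.
rewrite (_ : j + N + m * lam hD j n = j + m * lam hD j n + N * 1); last by nlia.
exact: GG_NK.
Qed.

Lemma Av_NK j k n : Av (j + N * k) n = Av j n.
Proof.
elim: k => [|k IH]; first by rewrite muln0 addn0.
by rewrite mulnS addnCA addnC Av_N.
Qed.

Lemma Av_mod j n : Av (j %% N) n = Av j n.
Proof. by rewrite {2}(divn_eq j N) mulnC addnC Av_NK. Qed.

Lemma a0_S (j : 'I_N) n : a0 (ordS j) n = Av j.+1 n.
Proof. by rewrite /a0 /= Av_mod. Qed.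

Lemma a0_P (j : 'I_N) n : a0 (ord_pred j) n = Av (j + m) n.
Proof. by rewrite /a0 /= addnS /= Av_mod. Qed.

Lemma o_sts (j : 'I_N) : o j = sts o j.
Proof. by rewrite /sts ph_small. Qed.

Lemma o_stsP (j : 'I_N) : o (ord_pred j) = sts o (j + m).
Proof. by rewrite /sts; congr o; apply: val_inj; rewrite /= addnS. Qed.

Lemma ordS_neq_pred (j : 'I_N) : ordS j != ord_pred j.
Proof.
apply/negP => /eqP /(congr1 val) /= /eqP.
rewrite addnS /= -addn1 eqn_modDl => /eqP h.
move: h; rewrite !modn_small //; first by move=> h; move: hm; rewrite -h.
by apply: ltn_trans hm _.
Qed.

Lemma arrow_out (j : 'I_N) : cyc_arrow o j =1
  (fun i => ((i == ordS j) && o j) || ((i == ord_pred j) && ~~ o (ord_pred j))).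
Proof.
move=> i; rewrite /cyc_arrow; congr (_ || _).
case: (eqVneq i (ord_pred j)) => [->|hi]; first by rewrite ord_predK eqxx.
case: (eqVneq j (ordS i)) => [hj|] //=; case/negP: hi; by rewrite hj ordSK.
Qed.

Lemma arrow_in (j : 'I_N) : (fun i => cyc_arrow o i j) =1
  (fun i => ((i == ord_pred j) && o (ord_pred j)) || ((i == ordS j) && ~~ o j)).
Proof.
move=> i; rewrite /cyc_arrow /=; congr (_ || _).
case: (eqVneq i (ord_pred j)) => [->|hi]; first by rewrite ord_predK eqxx.
case: (eqVneq j (ordS i)) => [hj|] //=; case/negP: hi; by rewrite hj ordSK.
Qed.

Lemma a0_frise : frise_with_variables o a0.
Proof.
split.
  by move=> j; rewrite /a0 Av0 /xs ph_small.
move=> j n.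
rewrite (prod_two _ (ordS_neq_pred j) (arrow_out j)).
have hne : ord_pred j != ordS j by rewrite eq_sym ordS_neq_pred.
rewrite (prod_two _ hne (arrow_in j)).
rewrite !a0_S !a0_P /a0 Av_diamond o_stsP o_sts.
case hj : (sts o j); case hjm : (sts o (j + m)).
- rewrite (A_nbr hR hD hj) (C_nbr hR hD hjm) /= ?GRing.mulr1 ?GRing.mul1r //.
- rewrite (A_nbr hR hD hj) (D_nbr hR hD hjm) /= ?GRing.mulr1 ?GRing.mul1r //.
- rewrite (B_nbr hR hD hj) (C_nbr hR hD hjm) /= ?GRing.mulr1 ?GRing.mul1r //.
  by rewrite GRing.mulrC.
- rewrite (B_nbr hR hD hj) (D_nbr hR hD hjm) /= ?GRing.mulr1 ?GRing.mul1r //.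
  by rewrite GRing.mulrC.
Qed.

Local Notation X := (xs m).
Local Notation S := (sts o).

Lemma ent_mmul (F : fieldType) (A B : m2 F) b1 b2 :
  ent (mmul A B) b1 b2 = (ent A b1 true * ent B true b2 + ent A b1 false * ent B false b2)%R.
Proof. by case: b1; case: b2. Qed.

Lemma Kp_ratio i : Kp (X i.+1 / X i)%R.
Proof. apply: KpM; [exact: Kpz| exact: Kpzinv]. Qed.

Lemma T_K i : (forall b1 b2, in_K (ent (T X S i) b1 b2)) /\ Kp (e11 (T X S i)).
Proof.
rewrite /T; case: (S i); split; try (case; case) => /=;
  by [exact: Kp_ratio | exact: (Kp_K (Kp_ratio _)) | exact: K0 | exact: K1 | exact: Kp1
     | exact: (Kp_K (Kpzinv _))].
Qed.

Lemma Pi_K p d : (forall b1 b2, in_K (ent (Pi X S p d) b1 b2)) /\ Kp (e11 (Pi X S p d)).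
Proof.
elim: d => [|d [IH1 IH2]] /=.
  split; last exact: Kp1.
  by case; case => /=; [exact: K1|exact: K0|exact: K0|exact: K1].
have [T1 T2] := T_K (p + d); split.
  move=> b1 b2; rewrite ent_mmul; apply: KD; apply: KM; done.
rewrite /mmul /=; apply: KpD; first exact: KpM.
by apply: KM; [exact: (IH1 true false) | exact: (T1 false true)].
Qed.

Lemma Av_Kp j n : Kp (Av j n).
Proof. rewrite /P5.Av /GG /G; apply: KpM; [exact: Kpz | exact: (Pi_K _ _).2]. Qed.

Lemma frise_uniq b : frise_with_variables o b -> forall n j, b j n = a0 j n.
Proof.
move=> [hb0 hbS]; have [ha0 haS] := a0_frise.
elim=> [|n IH]; first by move=> j; rewrite hb0 ha0.
apply: (acyc_ind hacyc) => j IHj.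
have e1 := hbS j n; have e2 := haS j n.
rewrite IH (eq_bigr (fun i => a0 i n) (fun i _ => IH i)) in e1.
rewrite (eq_bigr (fun i => a0 i n.+1) (fun i hi => IHj i hi)) in e1.
apply: (GRing.mulfI (Kp_neq0 (Av_Kp j n))).
by rewrite -/(a0 j n) e1 e2.
Qed.

Lemma periodic_NK (T' : Type) (f : nat -> T') : (forall x, f (x + N) = f x) ->
  forall x k, f (x + N * k) = f x.
Proof.
move=> h x; elim=> [|k IH]; first by rewrite muln0 addn0.
by rewrite mulnS addnCA addnC h.
Qed.

Lemma periodic_mod (T' : Type) (f : nat -> T') : (forall x, f (x + N) = f x) ->
  forall a, f (a %% N) = f a.
Proof.
move=> h a; rewrite /= {2}(divn_eq a N) addnC mulnC.
by rewrite (periodic_NK h).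
Qed.

Definition Lf (p : nat) := Pi X S (p + m * (1 + cL hD (p + m))) (1 + cL hD (p + m)).
Definition Rf (e : nat) := Pi X S e (1 + cR hR (e + 1)).

Lemma PiN p d : Pi X S (p + N) d = Pi X S p d.
Proof. apply: Pi_N; [exact: xs_N| exact: sts_N]. Qed.
Lemma PiNK p k d : Pi X S (p + N * k) d = Pi X S p d.
Proof. apply: Pi_NK; [exact: xs_N| exact: sts_N]. Qed.

Lemma Lf_N p : Lf (p + N) = Lf p.
Proof.
rewrite /Lf (_ : p + N + m = p + m + N); last by nlia.
by rewrite cL_N (_ : p + N + _ = p + m * (1 + cL hD (p + m)) + N) ?PiN //; nlia.
Qed.

Lemma Rf_N e : Rf (e + N) = Rf e.
Proof.
rewrite /Rf (_ : e + N + 1 = e + 1 + N); last by nlia.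
by rewrite cR_N PiN.
Qed.

Lemma Pi_step j k :
  Pi X S (j + m * lam hD j k.+1) (lam hD j k.+1 + rho hR j k.+1) =
  mmul (mmul (Lf (j + m * lam hD j k)) (Pi X S (j + m * lam hD j k) (lam hD j k + rho hR j k)))
       (Rf (j + rho hR j k)).
Proof.
rewrite lamS rhoS /Lf /Rf.
set l := lam hD j k; set r := rho hR j k.
rewrite (_ : j + m * l.+1 = j + m * l + m); last by nlia.
set c := cL hD (j + m * l + m); set c' := cR hR (j + r + 1).
rewrite (_ : j + m * (l + 1 + c) = j + m * l + m * (1 + c)); last by nlia.
rewrite (_ : l + 1 + c + (r + 1 + c') = (1 + c) + ((l + r) + (1 + c'))); last by nlia.
rewrite (Pi_split _ _ _ (1 + c) (l + r + (1 + c'))) (Pi_split _ _ _ (l + r) (1 + c')).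
rewrite -mmulA; congr mmul; congr mmul.
  rewrite (_ : j + m * l + m * (1 + c) + (1 + c) = j + m * l + N * (1 + c)); last by nlia.
  exact: PiNK.
rewrite (_ : j + m * l + m * (1 + c) + (1 + c) + (l + r) = j + r + N * (l + 1 + c)); last by nlia.
exact: PiNK.
Qed.

Section Auto.
Variable j : nat.
Definition nxt (pq : 'I_N * 'I_N) : 'I_N * 'I_N :=
  (ph m (pq.1 + m * (1 + cL hD (pq.1 + m))), ph m (pq.2 + 1 + cR hR (pq.2 + 1))).
Definition ph0 : 'I_N * 'I_N := (ph m (j + m * lam hD j 0), ph m (j + rho hR j 0)).

Lemma iter_nxt k : iter k nxt ph0 = (ph m (j + m * lam hD j k), ph m (j + rho hR j k)).
Proof.
elim: k => [|k IH] //; rewrite iterS IH /nxt /=.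
congr (_, _).
  pose F a := ph m (a + m * (1 + cL hD (a + m))).
  have hF : forall a, F (a + N) = F a.
    move=> a; rewrite /F (_ : a + N + m = a + m + N); last by nlia.
    by rewrite cL_N; apply: val_inj; rewrite /= addnAC modnDr.
  apply: etrans (periodic_mod hF (j + m * lam hD j k)) _; rewrite /F.
  rewrite (_ : j + m * (lam hD j k).+1 = j + m * lam hD j k + m); last by nlia.
  congr (ph m _); nlia.
pose F a := ph m (a + 1 + cR hR (a + 1)).
have hF : forall a, F (a + N) = F a.
  move=> a; rewrite /F (_ : a + N + 1 = a + 1 + N); last by nlia.
  by rewrite cR_N; apply: val_inj => /=; rewrite addnAC modnDr.
apply: etrans (periodic_mod hF (j + rho hR j k)) _; rewrite /F.
congr (ph m _); nlia.
Qed.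

Definition Lmat (pq : 'I_N * 'I_N) (c d : bool * bool) : ratfun N :=
  (ent (Lf pq.1) c.1 d.1 * ent (Rf pq.2) d.2 c.2)%R.
Definition lamv (pq : 'I_N * 'I_N) (b : bool * bool) : ratfun N :=
  if b.1 && b.2 then X pq.1 else 0%R.
Definition vv (k : nat) (b : bool * bool) : ratfun N :=
  ent (Pi X S (j + m * lam hD j k) (lam hD j k + rho hR j k)) b.1 b.2.

Lemma Av_rat : K_rational (Av j).
Proof.
apply: (@automaton_rat N _ _ ph0 (true, true) nxt Lmat lamv vv).
- move=> pq c d; rewrite /Lmat; apply: KM; [exact: (Pi_K _ _).1| exact: (Pi_K _ _).1].
- move=> pq b; rewrite /lamv; case: (_ && _); [exact: Kz| exact: K0].
- move=> b; exact: (Pi_K _ _).1.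
- move=> k i; rewrite iter_nxt /vv Pi_step ent_conj /Lmat /=.
  apply: eq_bigr => y _.
  by rewrite (periodic_mod Lf_N) (periodic_mod Rf_N).
- move=> k; rewrite iter_nxt /lamv /vv /=.
  rewrite -(pair_bigA _ (fun b1 b2 => ((if b1 && b2 then X (ph m (j + m * lam hD j k)) else 0) *
     ent (Pi X S (j + m * lam hD j k) (lam hD j k + rho hR j k)) b1 b2)%R)) /= !big_bool /=.
  rewrite !GRing.mul0r !GRing.addr0 /P5.Av /GG /G.
  by rewrite (periodic_mod (xs_N m)).
Qed.
End Auto.
End Main.

End P7.
Import P7.

Unset Implicit Arguments.
Import Order.TTheory GRing.Theory Num.Theory.
Local Open Scope ring_scope.

Lemma K_rational_ext (n : nat) (a b : nat -> ratfun n) :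
  (forall k, a k = b k) -> K_rational a -> K_rational b.
Proof.
move=> h [r [l [M [g [h1 [h2 [h3 h4]]]]]]].
exists r, l, M, g; split => //; split => //; split => // k; by rewrite -h h4.
Qed.

Theorem corollary2 (m : nat) (hm : (2 <= m)%N) (o : 'I_m.+1 -> bool)
    (hacyc : acyclic_orientation o) :
  (exists a : 'I_m.+1 -> nat -> ratfun m.+1, frise_with_variables o a) /\
  (forall a : 'I_m.+1 -> nat -> ratfun m.+1, frise_with_variables o a ->
     forall j : 'I_m.+1, K_rational (a j)).
Proof.
split.
  by exists (a0 hacyc); exact: a0_frise.
move=> a ha j.
have := Av_rat hacyc j; apply: K_rational_ext => k.
by rewrite (frise_uniq hm hacyc ha).
Qed.
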